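(* Let $\vec{A}\in\mathcal{G}^{p,q}$, let $(\vec{B}_1,\dots,\vec{B}_d)$ be an ordered tuple of mutually coorthogonal blades with $\vec B_k^2\in\mathbb{R}\setminus\{0\}$, and let $\vec{j}\in\{0,1\}^d$. Then $\vec{A}_{\vec c^{\vec{j}}(\overrightarrow{\vec B_1,\dots,\vec B_d})}=\vec{A}_{\vec c^{\vec{j}}(\overleftarrow{\vec B_1,\dots,\vec B_d})}$.
   Context: $\mathcal{G}^{p,q}$ is the real geometric algebra of $\mathbb{R}^{p,q}$. Blades are coorthogonal if $\vec A\vec B=\pm\vec B\vec A$. For invertible $\vec B$: $\vec{A}_{\vec c^0(\vec{B})}=\frac12(\vec{A}+\vec{B}^{-1}\vec{A}\vec{B})$, $\vec{A}_{\vec c^1(\vec{B})}=\frac12(\vec{A}-\vec{B}^{-1}\vec{A}\vec{B})$; $\vec{A}_{\vec c^{\vec{j}}(\overrightarrow{\vec B_1,\dots,\vec B_d})}=((\vec{A}_{\vec c^{j_1}(\vec{B}_1)})_{\vec c^{j_2}(\vec{B}_2)}\cdots)_{\vec c^{j_d}(\vec{B}_d)}$ and $\vec{A}_{\vec c^{\vec{j}}(\overleftarrow{\vec B_1,\dots,\vec B_d})}=((\vec{A}_{\vec c^{j_d}(\vec{B}_d)})_{\vec c^{j_{d-1}}(\vec{B}_{d-1})}\cdots)_{\vec c^{j_1}(\vec{B}_1)}$. *)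

(* Defs.v *)
(* Real geometric algebra G^{p,q} built on basis blades
   e_X, X a subset of {0,...,p+q-1}; e_i^2 = +1 for i < p, -1 for i >= p. *)
From HB Require Import structures.
From mathcomp Require Import all_boot all_order all_algebra.
From mathcomp Require Import reals.
From Stdlib Require Import ClassicalEpsilon.
Set Implicit Arguments. Unset Strict Implicit. Unset Printing Implicit Defensive.
Import Order.TTheory GRing.Theory Num.Theory.
Local Open Scope ring_scope.

Section GA.
Variables (R : realType) (p q : nat).
Local Notation n := (p + q)%N.

Definition mv := {ffun {set 'I_n} -> R}.

(* sign of reordering e_X e_Y: number of pairs x in X, y in Y with y < x *)
Definition reorder_sign (X Y : {set 'I_n}) : R :=
  (-1) ^+ #|[set ij : 'I_n * 'I_n | [&& ij.1 \in X, ij.2 \in Y & (ij.2 < ij.1)%N]]|.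

(* metric factor of e_X e_Y : product of e_i^2 over i in X ∩ Y *)
Definition metric_factor (X Y : {set 'I_n}) : R :=
  \prod_(i in X :&: Y) (if (i < p)%N then 1 else -1).

Definition symdiff (X Y : {set 'I_n}) : {set 'I_n} := (X :\: Y) :|: (Y :\: X).

Definition mv_add (A B : mv) : mv := [ffun X => A X + B X].
Definition mv_opp (A : mv) : mv := [ffun X => - A X].
Definition mv_scale (a : R) (A : mv) : mv := [ffun X => a * A X].
Definition mv_scalar (a : R) : mv := [ffun X => if X == set0 then a else 0].
Definition mv_zero : mv := mv_scalar 0.
Definition mv_one : mv := mv_scalar 1.

Definition gp (A B : mv) : mv :=
  [ffun C => \sum_(X : {set 'I_n}) \sum_(Y : {set 'I_n})
     (if symdiff X Y == C then A X * B Y * reorder_sign X Y * metric_factor X Y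
      else 0)].

Definition wedge (A B : mv) : mv :=
  [ffun C => \sum_(X : {set 'I_n}) \sum_(Y : {set 'I_n})
     (if [disjoint X & Y] && (X :|: Y == C) then A X * B Y * reorder_sign X Y
      else 0)].

Definition is_vector (v : mv) : Prop := forall X : {set 'I_n}, #|X| <> 1%N -> v X = 0.

(* a blade is a scalar multiple of an outer product of vectors
   (the scalar is only needed for grade 0) *)
Definition is_blade (B : mv) : Prop :=
  exists (a : R) (s : seq mv), (forall v, List.In v s -> is_vector v) /\
    B = mv_scale a (foldr wedge mv_one s).

Definition coorthogonal (A B : mv) : Prop :=
  gp A B = gp B A \/ gp A B = mv_opp (gp B A).

Definition square_nonzero_scalar (B : mv) : Prop :=
  exists c : R, c != 0 /\ gp B B = mv_scalar c.

(* two-sided inverse (chosen by classical choice; 0 if none exists) *)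
Definition mv_inv (B : mv) : mv :=
  epsilon (inhabits mv_zero) (fun X => gp B X = mv_one /\ gp X B = mv_one).

(* A_{c^j(B)} with j = false meaning 0 and j = true meaning 1 *)
Definition cproj (j : bool) (B A : mv) : mv :=
  let C := gp (gp (mv_inv B) A) B in
  mv_scale (2^-1) (if j then mv_add A (mv_opp C) else mv_add A C).

(* forward: B_1 applied first, B_d last *)
Definition cproj_fwd (d : nat) (Bs : 'I_d -> mv) (js : 'I_d -> bool) (A : mv) : mv :=
  foldl (fun X k => cproj (js k) (Bs k) X) A (enum 'I_d).

(* backward: B_d applied first, B_1 last *)
Definition cproj_bwd (d : nat) (Bs : 'I_d -> mv) (js : 'I_d -> bool) (A : mv) : mv :=
  foldr (fun k X => cproj (js k) (Bs k) X) A (enum 'I_d).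

End GA.

(* Main.v *)
Require Import Defs.
From mathcomp Require Import all_boot all_order all_algebra.
From mathcomp Require Import reals ring.
From Stdlib Require Import ClassicalEpsilon.
Set Implicit Arguments. Unset Strict Implicit. Unset Printing Implicit Defensive.
Import Order.TTheory GRing.Theory Num.Theory.
Local Open Scope ring_scope.


Section Fold.
Variables (I : eqType) (T : Type) (f : I -> T -> T).
Hypothesis fcomm : forall a b, a != b -> forall Z, f a (f b Z) = f b (f a Z).

Lemma foldr_push x s Z : x \notin s -> foldr f (f x Z) s = f x (foldr f Z s).
Proof.
elim: s => [|y s IH] //=; rewrite inE negb_or => /andP [xy xs].
by rewrite IH // fcomm // eq_sym.
Qed.

Lemma foldr_rev s Z : uniq s -> foldr f Z (rev s) = foldr f Z s.
Proof.
elim: s Z => [|x s IH] Z //= /andP [xs us].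
by rewrite rev_cons foldr_rcons IH // foldr_push.
Qed.
End Fold.

Section P.
Variables (R : realType) (p q : nat).
Local Notation n := (p + q)%N.
Local Notation mv := (mv R p q).
Local Notation S := {set 'I_n}.
Local Notation reorder_sign := (@reorder_sign R p q).
Local Notation metric_factor := (@metric_factor R p q).
Local Notation symdiff := (@symdiff p q).

Definition sg (b : bool) : R := if b then -1 else 1.
Lemma sgM a b : sg a * sg b = sg (a (+) b).
Proof. by case: a; case: b; rewrite /sg /= ?mulN1r ?opprK ?mul1r ?mulr1. Qed.

Definition ww (i : 'I_n) : R := if (i < p)%N then 1 else -1.
Definition mt (i : 'I_n) (b : bool) : R := if b then ww i else 1.
Lemma mtM i a b : mt i a * mt i b = mt i (a (+) b).
Proof.
rewrite /mt /ww; case: a; case: b; rewrite /= ?mul1r ?mulr1 //.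
by case: ifP; rewrite ?mulr1 ?mulN1r ?opprK.
Qed.

Lemma rs_prod (X Y : S) : reorder_sign X Y =
  \prod_(ij : 'I_n * 'I_n) sg [&& ij.1 \in X, ij.2 \in Y & (ij.2 < ij.1)%N].
Proof.
rewrite /reorder_sign -prodr_const big_mkcond; apply: eq_bigr => ij _.
by rewrite inE /sg; case: (_ && _).
Qed.

Lemma mf_prod (X Y : S) : metric_factor X Y =
  \prod_(i : 'I_n) mt i ((i \in X) && (i \in Y)).
Proof.
rewrite /metric_factor big_mkcond; apply: eq_bigr => i _.
by rewrite inE /mt /ww.
Qed.

Lemma in_symdiff (X Y : S) x : x \in symdiff X Y = (x \in X) (+) (x \in Y).
Proof. by rewrite /symdiff !inE; case: (x \in X); case: (x \in Y). Qed.

Lemma symdiffA (X Y W : S) : symdiff (symdiff X Y) W = symdiff X (symdiff Y W).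
Proof. by apply/setP => x; rewrite !in_symdiff addbA. Qed.

Lemma symdiff0X (Y : S) : symdiff set0 Y = Y.
Proof. by apply/setP => x; rewrite in_symdiff inE. Qed.
Lemma symdiffX0 (Y : S) : symdiff Y set0 = Y.
Proof. by apply/setP => x; rewrite in_symdiff inE addbF. Qed.

Definition ee (X Y : S) : R := reorder_sign X Y * metric_factor X Y.

Lemma ekey (X Y W : S) : ee X Y * ee (symdiff X Y) W = ee Y W * ee X (symdiff Y W).
Proof.
rewrite /ee !rs_prod !mf_prod mulrACA [RHS]mulrACA; congr (_ * _).
  rewrite -!big_split; apply: eq_bigr => -[i j] _ /=; rewrite !sgM !in_symdiff.
  congr sg.
  by move: (i \in X) (i \in Y) (i \in W) (j \in X) (j \in Y) (j \in W) (j < i)%N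
    => [] [] [] [] [] [] [].
rewrite -!big_split; apply: eq_bigr => i _ /=; rewrite !mtM !in_symdiff.
congr mt.
by move: (i \in X) (i \in Y) (i \in W) => [] [] [].
Qed.

Lemma ee0X (Y : S) : ee set0 Y = 1.
Proof.
rewrite /ee rs_prod mf_prod !big1 ?mulr1 // => ? _; by rewrite inE.
Qed.
Lemma eeX0 (Y : S) : ee Y set0 = 1.
Proof.
rewrite /ee rs_prod mf_prod !big1 ?mulr1 // => ? _; by rewrite inE ?andbF.
Qed.

Lemma gpE (A B : mv) C : gp A B C = \sum_X \sum_Y
  (if symdiff X Y == C then A X * (B Y * ee X Y) else 0).
Proof.
rewrite ffunE; apply: eq_bigr => X _; apply: eq_bigr => Y _.
by rewrite /ee !mulrA.
Qed.

Lemma collapse (f : S) (G : S -> R) : \sum_U (if f == U then G U else 0) = G f.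
Proof.
rewrite (bigD1 f) //= eqxx big1 ?addr0 // => U HU.
by rewrite eq_sym (negbTE HU).
Qed.

Lemma perm1 (F : S -> S -> S -> S -> R) :
  \sum_a \sum_b \sum_c \sum_d F a b c d = \sum_c \sum_d \sum_b \sum_a F a b c d.
Proof.
rewrite exchange_big.
transitivity (\sum_b \sum_c \sum_d \sum_a F a b c d).
  apply: eq_bigr => b _; rewrite exchange_big; apply: eq_bigr => c _.
  exact: exchange_big.
rewrite exchange_big; apply: eq_bigr => c _; exact: exchange_big.
Qed.

Lemma perm2 (F : S -> S -> S -> S -> R) :
  \sum_a \sum_b \sum_c \sum_d F a b c d = \sum_a \sum_c \sum_d \sum_b F a b c d.
Proof.
apply: eq_bigr => a _; rewrite exchange_big; apply: eq_bigr => c _.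
exact: exchange_big.
Qed.

Lemma gpA (A B D : mv) : gp A (gp B D) = gp (gp A B) D.
Proof.
apply/ffunP => C.
rewrite gpE [RHS]gpE.
transitivity (\sum_X \sum_V \sum_Y \sum_W (if symdiff Y W == V then
   (if symdiff X V == C then A X * (B Y * (D W * ee Y W) * ee X V) else 0) else 0)).
  apply: eq_bigr => X _; apply: eq_bigr => V _; rewrite gpE.
  case: (symdiff X V == C).
    rewrite /= big_distrl big_distrr /=; apply: eq_bigr => Y _.
    rewrite big_distrl big_distrr /=; apply: eq_bigr => W _.
    by case: ifP; rewrite ?mul0r ?mulr0.
  by rewrite big1 // => Y _; rewrite big1 // => W _; case: ifP.
transitivity (\sum_U \sum_W \sum_X \sum_Y (if symdiff X Y == U then
   (if symdiff U W == C then A X * (B Y * ee X Y) * (D W * ee U W) else 0) else 0)); last first.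
  apply: eq_bigr => U _; apply: eq_bigr => W _; rewrite gpE.
  case: (symdiff U W == C).
    rewrite big_distrl /=; apply: eq_bigr => X _.
    rewrite big_distrl /=; apply: eq_bigr => Y _.
    by case: ifP; rewrite ?mul0r ?mulr0.
  by rewrite big1 // => X _; rewrite big1 // => Y _; case: ifP.
rewrite [LHS]perm2 [RHS]perm1; apply: eq_bigr => X _; apply: eq_bigr => Y _.
apply: eq_bigr => W _; rewrite !collapse symdiffA.
case: ifP => // _.
transitivity (A X * B Y * D W * (ee Y W * ee X (symdiff Y W))); first ring.
rewrite -ekey; ring.
Qed.


Local Notation gp := (@gp R p q).
Local Notation mv_scale := (@mv_scale R p q).
Local Notation mv_add := (@mv_add R p q).
Local Notation mv_scalar := (@mv_scalar R p q).

Lemma gp_scalel a (A B : mv) : gp (mv_scale a A) B = mv_scale a (gp A B).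
Proof.
apply/ffunP => C; rewrite [RHS]ffunE !gpE big_distrr; apply: eq_bigr => X _.
rewrite big_distrr; apply: eq_bigr => Y _; rewrite ffunE.
case: ifP => _; rewrite /= ?mulr0 ?mulrA //. Qed.

Lemma gp_scaler a (A B : mv) : gp A (mv_scale a B) = mv_scale a (gp A B).
Proof.
apply/ffunP => C; rewrite [RHS]ffunE !gpE big_distrr; apply: eq_bigr => X _.
rewrite big_distrr; apply: eq_bigr => Y _; rewrite ffunE.
case: ifP => _ /=; [ring | by rewrite mulr0].
Qed.

Lemma gp_addl (A A' B : mv) : gp (mv_add A A') B = mv_add (gp A B) (gp A' B).
Proof.
apply/ffunP => C; rewrite [RHS]ffunE !gpE -big_split; apply: eq_bigr => X _.
rewrite -big_split; apply: eq_bigr => Y _; rewrite ffunE.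
case: ifP => _ /=; [ring | by rewrite addr0].
Qed.

Lemma gp_addr (A B B' : mv) : gp A (mv_add B B') = mv_add (gp A B) (gp A B').
Proof.
apply/ffunP => C; rewrite [RHS]ffunE !gpE -big_split; apply: eq_bigr => X _.
rewrite -big_split; apply: eq_bigr => Y _; rewrite ffunE.
case: ifP => _ /=; [ring | by rewrite addr0].
Qed.

Lemma gp_scalarl c (A : mv) : gp (mv_scalar c) A = mv_scale c A.
Proof.
apply/ffunP => C; rewrite gpE ffunE (bigD1 set0) //= addrC big1 ?add0r.
  transitivity (\sum_Y (if C == Y then c * A Y else 0)); last by rewrite collapse.
  apply: eq_bigr => Y _; rewrite symdiff0X ee0X ffunE eqxx mulr1 eq_sym.
  by case: ifP.
move=> X HX; apply: big1 => Y _; rewrite ffunE (negbTE HX) mul0r.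
by case: ifP.
Qed.

Lemma gp_scalarr c (A : mv) : gp A (mv_scalar c) = mv_scale c A.
Proof.
apply/ffunP => C; rewrite gpE ffunE.
transitivity (\sum_X (if C == X then c * A X else 0)); last by rewrite collapse.
apply: eq_bigr => X _.
rewrite (bigD1 set0) //= addrC big1 ?add0r.
  rewrite symdiffX0 eeX0 ffunE eqxx mulr1 eq_sym.
  by case: ifP => // _; rewrite mulrC.
move=> Y HY; rewrite ffunE (negbTE HY) mul0r mulr0.
by case: ifP.
Qed.

Lemma scale_scale a b (A : mv) : mv_scale a (mv_scale b A) = mv_scale (a * b) A.
Proof. by apply/ffunP => X; rewrite !ffunE mulrA. Qed.

Lemma scale1 (A : mv) : mv_scale 1 A = A.
Proof. by apply/ffunP => X; rewrite !ffunE mul1r. Qed.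

Lemma scale_scalar a b : mv_scale a (mv_scalar b) = mv_scalar (a * b).
Proof. by apply/ffunP => X; rewrite !ffunE; case: ifP; rewrite ?mulr0. Qed.

Lemma gp_onel (A : mv) : gp (mv_one R p q) A = A.
Proof. by rewrite /mv_one gp_scalarl scale1. Qed.
Lemma gp_oner (A : mv) : gp A (mv_one R p q) = A.
Proof. by rewrite /mv_one gp_scalarr scale1. Qed.

Lemma inv_eq (B : mv) c : c != 0 -> gp B B = mv_scalar c ->
  mv_inv B = mv_scale c^-1 B.
Proof.
move=> c0 HB.
have Hl : gp B (mv_scale c^-1 B) = mv_one R p q.
  by rewrite gp_scaler HB scale_scalar mulVf.
have Hr : gp (mv_scale c^-1 B) B = mv_one R p q.
  by rewrite gp_scalel HB scale_scalar mulVf.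
rewrite /mv_inv.
have [H1 H2] := epsilon_spec (inhabits (mv_zero R p q))
  (fun X => gp B X = mv_one R p q /\ gp X B = mv_one R p q)
  (ex_intro _ (mv_scale c^-1 B) (conj Hl Hr)).
set Z := epsilon _ _ in H1 H2 *.
by rewrite -[Z]gp_oner -Hl gpA H2 gp_onel.
Qed.

Definition phi (B A : mv) := gp (gp B A) B.

Lemma phi_lin B (F G : mv) a b :
  phi B [ffun X => a * F X + b * G X] = [ffun X => a * phi B F X + b * phi B G X].
Proof.
have -> : [ffun X => a * F X + b * G X] = mv_add (mv_scale a F) (mv_scale b G).
  by apply/ffunP => X; rewrite !ffunE.
rewrite /phi gp_addr gp_addl !gp_scaler !gp_scalel.
by apply/ffunP => X; rewrite !ffunE.
Qed.

Lemma cprojE j (B A : mv) c : c != 0 -> gp B B = mv_scalar c ->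
  cproj j B A = [ffun X => 2^-1 * A X + (2^-1 * sg j * c^-1) * phi B A X].
Proof.
move=> c0 HB; rewrite /cproj (inv_eq c0 HB) gp_scalel gp_scalel.
apply/ffunP => X; case: j; rewrite !ffunE /sg; ring.
Qed.

Lemma phi_comm (Bk Bl A : mv) : coorthogonal Bk Bl ->
  phi Bk (phi Bl A) = phi Bl (phi Bk A).
Proof.
move=> Hc.
have H : gp (gp (gp Bk Bl) A) (gp Bl Bk) = gp (gp (gp Bl Bk) A) (gp Bk Bl).
  case: Hc => ->; first by [].
  have -> : mv_opp (gp Bl Bk) = mv_scale (-1) (gp Bl Bk).
    by apply/ffunP => X; rewrite !ffunE mulN1r.
  by rewrite gp_scalel gp_scalel gp_scaler.
rewrite /phi !gpA in H *; exact: H.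
Qed.

Lemma cproj_comm jk jl (Bk Bl A : mv) :
  square_nonzero_scalar Bk -> square_nonzero_scalar Bl -> coorthogonal Bk Bl ->
  cproj jk Bk (cproj jl Bl A) = cproj jl Bl (cproj jk Bk A).
Proof.
move=> [ck [ck0 Hk]] [cl [cl0 Hl]] Hc.
rewrite (cprojE _ _ ck0 Hk) (cprojE _ _ cl0 Hl) (cprojE _ _ ck0 Hk) (cprojE _ _ cl0 Hl).
rewrite !phi_lin phi_comm //.
apply/ffunP => X; rewrite !ffunE; ring.
Qed.

End P.

Theorem corollary3p5 (R : realType) (p q d : nat) (A : mv R p q)
  (Bs : 'I_d -> mv R p q) (js : 'I_d -> bool) :
  (forall k, is_blade (Bs k)) ->
  (forall k, square_nonzero_scalar (Bs k)) ->
  (forall k l, k != l -> coorthogonal (Bs k) (Bs l)) ->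
  cproj_fwd Bs js A = cproj_bwd Bs js A.
Proof.
move=> _ Hsq Hco.
rewrite /cproj_fwd /cproj_bwd -{1}[enum 'I_d]revK foldl_rev.
apply: (foldr_rev (f := fun k X => cproj (js k) (Bs k) X)); last first.
  exact: enum_uniq.
move=> a b ab Z; exact: (cproj_comm (js a) (js b) Z (Hsq a) (Hsq b) (Hco a b ab)).
Qed.
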